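(* If $(C_1,F_1)$ and $(C_2,F_2)$ are antlers in an undirected multigraph $G$, then $(C_1\setminus(C_2\cup F_2),\,F_1\setminus(C_2\cup F_2))$ is an antler in $G-(C_2\cup F_2)$.
   Context: A feedback vertex set (FVS) of $G$ is a set $X\subseteq V(G)$ with $G-X$ acyclic (self-loops and pairs of parallel edges count as cycles); $\mathrm{fvs}(G)$ is the minimum size of a FVS. For disjoint $X,Y$, $e(X,Y)$ is the number of edges between $X$ and $Y$. A feedback vertex cut (FVC) in $G$ is a pair of disjoint sets $C,F\subseteq V(G)$ such that $G[F]$ is a forest and every tree $T$ of $G[F]$ satisfies $e(V(T),V(G)\setminus(C\cup F))\le1$. An antler in $G$ is a FVC $(C,F)$ with $|C|\le\mathrm{fvs}(G[C\cup F])$. *)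

(* Defs.v *)
From mathcomp Require Import all_boot.
Set Implicit Arguments. Unset Strict Implicit. Unset Printing Implicit Defensive.

(* A multigraph on vertex type V: a finite edge type with an (unordered) pair
   of endpoints per edge. A loop is an edge with equal endpoints. *)
Record mgraph (V : finType) := MGraph { edge : finType; ends : edge -> V * V }.

Section Defs.
Variables (V : finType) (G : mgraph V).

Definition links (e : edge G) (x y : V) : bool :=
  (ends e == (x, y)) || (ends e == (y, x)).

(* A cycle in the induced subgraph G[S]: distinct vertices v_0..v_{k-1} in S
   (k >= 1) and distinct edges e_0..e_{k-1}, e_i joining v_i and v_{i+1 mod k}.
   k = 1 is a self-loop, k = 2 a pair of parallel edges. *)
Definition is_cycle (S : {set V}) (v0 : V) (vs : seq V) (e0 : edge G)
    (es : seq (edge G)) : Prop :=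
  let cv := v0 :: vs in let ce := e0 :: es in
  [/\ size ce = size cv, uniq cv, uniq ce, {subset cv <= S} &
      forall i, i < size cv ->
        links (nth e0 ce i) (nth v0 cv i) (nth v0 cv (i.+1 %% size cv))].

Definition acyclic (S : {set V}) : Prop :=
  forall v0 vs e0 es, ~ is_cycle S v0 vs e0 es.

Definition adjF (F : {set V}) : rel V :=
  fun x y => [&& x \in F, y \in F & [exists e : edge G, links e x y]].

Definition comp (F : {set V}) (x : V) : {set V} := [set y | connect (adjF F) x y].

Definition ecount (X Y : {set V}) : nat :=
  #|[set e : edge G | (((ends e).1 \in X) && ((ends e).2 \in Y))
                   || (((ends e).1 \in Y) && ((ends e).2 \in X))]|.

(* Notions relative to the graph G[S] (S = its vertex set). *)
Definition is_fvs (W X : {set V}) : Prop := X \subset W /\ acyclic (W :\: X).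

Definition FVC (S C F : {set V}) : Prop :=
  [/\ C \subset S, F \subset S, [disjoint C & F], acyclic F &
      forall x, x \in F -> ecount (comp F x) (S :\: (C :|: F)) <= 1].

Definition antler (S C F : {set V}) : Prop :=
  FVC S C F /\ forall X, is_fvs (C :|: F) X -> #|C| <= #|X|.

End Defs.

(* Main.v *)
Require Import Defs.
From mathcomp Require Import all_boot zify.
Set Implicit Arguments. Unset Strict Implicit. Unset Printing Implicit Defensive.

Lemma cyc_cross (n : nat) (f : nat -> bool) a b : a < n -> b < n -> f a -> ~~ f b ->
  exists2 i, i < n & f i && ~~ f (i.+1 %% n).
Proof.
move=> an bn fa fb.
case: (boolP [exists i : 'I_n, f i && ~~ f (i.+1 %% n)]).
  by case/existsP => i Hi; exists i.
move/existsPn => H.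
have H' : forall m, f ((a + m) %% n).
  elim=> [|m IH]; first by rewrite addn0 modn_small.
  have := H (Ordinal (ltn_pmod (a + m) (leq_ltn_trans (leq0n _) an))).
  rewrite /= IH /= negbK -addn1 modnDml addn1 addnS //.
have := H' (b + n - a); have -> : a + (b + n - a) = b + n by lia.
by rewrite modnDr modn_small // (negbTE fb).
Qed.

Section S.
Variables (V : finType) (G : mgraph V).

Lemma acyclic_sub (S T : {set V}) : acyclic G S -> T \subset S -> acyclic G T.
Proof.
move=> aS TS v0 vs e0 es [h1 h2 h3 h4 h5]; apply: (aS v0 vs e0 es); split => //.
by move=> x /h4 xT; apply: (subsetP TS).
Qed.

Lemma links_sym (e : edge G) x y : links e x y = links e y x.
Proof. by rewrite /links orbC. Qed.

Lemma comp_sub (F : {set V}) x : x \in F -> Defs.comp G F x \subset F.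
Proof.
move=> xF; apply/subsetP => y; rewrite inE => /connectP [p pth ->].
elim: p x xF pth => //= z p IH x xF /andP [/and3P [_ zF _] pth]; exact: IH pth.
Qed.

Lemma ecount_mono (X X' Y Y' : {set V}) : X \subset X' -> Y \subset Y' ->
  ecount G X Y <= ecount G X' Y'.
Proof.
move=> /subsetP XX /subsetP YY; apply: subset_leq_card; apply/subsetP => e.
rewrite !inE => /orP [/andP [a b]|/andP [a b]].
  by rewrite (XX _ a) (YY _ b).
by rewrite (XX _ b) (YY _ a) orbT.
Qed.

Lemma mix (C F Q R : {set V}) : acyclic G F ->
  (forall x, x \in F -> ecount G (Defs.comp G F x) (~: (C :|: F)) <= 1) ->
  Q \subset F -> R \subset ~: (C :|: F) -> acyclic G R -> acyclic G (Q :|: R).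
Proof.
move=> aF hF QF RC aR v0 vs e0 es cyc.
case: (cyc) => h1 h2 h3 h4 h5.
case: (boolP (all (fun v => v \in R) (v0 :: vs))) => [/allP allR|].
  apply: (aR v0 vs e0 es); split => //.
case/allPn => x xcv xnR.
have xQ : x \in Q by move: (h4 _ xcv); rewrite inE (negbTE xnR) orbF.
have xF : x \in F by apply: (subsetP QF).
set T := Defs.comp G F x.
have TF : T \subset F by apply: comp_sub.
have xT : x \in T by rewrite inE connect0.
case: (boolP (all (fun v => v \in T) (v0 :: vs))) => [/allP allT|].
  apply: (aF v0 vs e0 es); split => // v /allT; apply: (subsetP TF).
case/allPn => y ycv yT.
set cv := v0 :: vs in h1 h2 h4 h5 xcv ycv.
set ce := e0 :: es in h1 h3 h5.
set n := size cv.
have nth_in : forall i, i < n -> nth v0 cv i \in Q :|: R.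
  by move=> i i_n; apply: h4; apply: mem_nth.
have modlt : forall i, i.+1 %% n < n.
  by move=> i; apply: ltn_pmod; rewrite /n /cv.
have cross : forall i, i < n -> (nth v0 cv i \in T) -> (nth v0 cv (i.+1 %% n) \notin T) ->
    nth v0 cv (i.+1 %% n) \in ~: (C :|: F).
  move=> i i_n iT i1T.
  have := nth_in _ (modlt i); rewrite inE => /orP [/(subsetP QF) i1F|/(subsetP RC) //].
  exfalso; move/negP: i1T; apply; rewrite inE.
  apply: (connect_trans (_ : connect _ x (nth v0 cv i))); first by move: iT; rewrite inE.
  apply: connect1; rewrite /adjF i1F (subsetP TF _ iT) /=.
  by apply/existsP; exists (nth e0 ce i); apply: h5.
have cross' : forall i, i < n -> (nth v0 cv i \notin T) -> (nth v0 cv (i.+1 %% n) \in T) ->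
    nth v0 cv i \in ~: (C :|: F).
  move=> i i_n iT i1T.
  have := nth_in _ i_n; rewrite inE => /orP [/(subsetP QF) iF|/(subsetP RC) //].
  exfalso; move/negP: iT; apply; rewrite inE.
  apply: (connect_trans (_ : connect _ x (nth v0 cv (i.+1 %% n)))); first by move: i1T; rewrite inE.
  apply: connect1; rewrite /adjF iF (subsetP TF _ i1T) /=.
  by apply/existsP; exists (nth e0 ce i); rewrite links_sym; apply: h5.
have [a an fa] : exists2 a, a < n & nth v0 cv a \in T.
  by exists (index x cv); [rewrite index_mem | rewrite nth_index].
have [b bn fb] : exists2 b, b < n & nth v0 cv b \notin T.
  by exists (index y cv); [rewrite index_mem | rewrite nth_index].
have [i i_n /andP [fi fi1]] := @cyc_cross n (fun k => nth v0 cv k \in T) a b an bn fa fb.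
have nfa : ~~ ~~ (nth v0 cv a \in T) by rewrite negbK.
have [j j_n /andP [fj fj1]] := @cyc_cross n (fun k => nth v0 cv k \notin T) b a bn an fb nfa.
rewrite negbK in fj1.
have ij : i != j by apply/eqP => eij; move: fj; rewrite -eij fi.
have eij : nth e0 ce i != nth e0 ce j by rewrite nth_uniq // h1.
have := hF x xF; rewrite leqNgt => /negP; apply.
rewrite /ecount -/T.
have <- : #|[set nth e0 ce i; nth e0 ce j]| = 2 by rewrite cards2 eij.
have ci := cross i i_n fi fi1; have cj := cross' j j_n fj fj1.
move: fi ci fj1 cj; rewrite !inE => fi ci fj1 cj.
apply: subset_leq_card; apply/subsetP => e; rewrite !inE => /orP [] /eqP ->.
  have := h5 i i_n; rewrite -/n /links => /orP [] /eqP -> /=; by rewrite ?fi ?ci ?orbT.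
have := h5 j j_n; rewrite -/n /links => /orP [] /eqP -> /=; by rewrite ?fj1 ?cj ?orbT.
Qed.
End S.

Theorem proposition11 (V : finType) (G : mgraph V) (C1 F1 C2 F2 : {set V}) :
  antler G setT C1 F1 -> antler G setT C2 F2 ->
  antler G (~: (C2 :|: F2)) (C1 :\: (C2 :|: F2)) (F1 :\: (C2 :|: F2)).
Proof.
move=> [[_ _ d1 a1 e1] m1] [[_ _ d2 a2 e2] m2].
set W := C2 :|: F2.
have e1' : forall x, x \in F1 -> ecount G (Defs.comp G F1 x) (~: (C1 :|: F1)) <= 1.
  by move=> x xF; rewrite -setTD; apply: e1.
have e2' : forall x, x \in F2 -> ecount G (Defs.comp G F2 x) (~: (C2 :|: F2)) <= 1.
  by move=> x xF; rewrite -setTD; apply: e2.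
split; first split.
- by apply/subsetP => v; rewrite !inE => /andP [].
- by apply/subsetP => v; rewrite !inE => /andP [].
- apply: (disjointWl (subsetDl _ _)); exact: (disjointWr (subsetDl _ _)).
- by apply: (acyclic_sub a1); apply: subsetDl.
- move=> x; rewrite inE => /andP [xW xF].
  apply: leq_trans (e1 x xF); apply: ecount_mono.
  + apply/subsetP => y; rewrite !inE; apply: connect_sub => u w /=.
    rewrite /adjF !inE => /and3P [/andP [_ uF] /andP [_ wF] ex].
    by apply: connect1; rewrite /adjF uF wF.
  + apply/subsetP => y; rewrite /W !inE.
    by case: (y \in C2); case: (y \in F2); case: (y \in C1); case: (y \in F1).
move=> X [XS aX].
set A := C1 :|: F1.
have s1 : #|C2 :&: F1| <= #|C1 :&: F2|.
  set X2 := (C2 :\: F1) :|: (C1 :&: F2).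
  have h : #|C2| <= #|X2|.
    apply: m2; split.
      by apply/subsetP => v; rewrite !inE => /orP [/andP [_ ->]|/andP [_ ->]] //; rewrite orbT.
    apply: (acyclic_sub (_ : acyclic G ((W :&: F1) :|: (F2 :\: A)))).
      apply: (mix a1 e1').
      - by apply: subsetIr.
      - by apply/subsetP => v; rewrite /A !inE => /andP [].
      - by apply: (acyclic_sub a2); apply: subsetDl.
    apply/subsetP => v; rewrite /X2 /W /A !inE.
    case: (v \in C2); case: (v \in F1); case: (v \in C1); case: (v \in F2) => //.
  have := cardsID F1 C2.
  have : #|X2| <= #|C2 :\: F1| + #|C1 :&: F2| by apply: leq_card_setU.
  lia.
have h : #|C1| <= #|X :|: (A :&: C2)|.
  apply: m1; split.
    apply/subsetP => v; rewrite !inE => /orP [/(subsetP XS)|/andP [-> _]] //.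
    by rewrite !inE => /orP [/andP [_ ->]|/andP [_ ->]] //; rewrite orbT.
  apply: (acyclic_sub (_ : acyclic G ((A :&: F2) :|: ((C1 :\: W :|: F1 :\: W) :\: X)))).
    apply: (mix a2 e2').
    - by apply: subsetIr.
    - by apply/subsetP => v; rewrite !inE => /andP [_ /orP [/andP [] | /andP []]].
    - exact: aX.
  apply/subsetP => v; rewrite /A /W !inE.
  case: (v \in X); case: (v \in C2); case: (v \in F1); case: (v \in C1); case: (v \in F2) => //.
have h1 : #|X :|: A :&: C2| <= #|X| + #|A :&: C2| by apply: leq_card_setU.
have h2 : #|A :&: C2| <= #|C1 :&: C2| + #|F1 :&: C2|.
  rewrite /A setIUl; apply: leq_card_setU.
have h3 : #|C1 :&: C2| + #|C1 :&: F2| <= #|C1 :&: W|.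
  have := cardsUI (C1 :&: C2) (C1 :&: F2).
  have -> : (C1 :&: C2) :&: (C1 :&: F2) = set0.
    rewrite setIACA setIid; apply/eqP; rewrite -subset0.
    apply: subset_trans (subsetIr _ _) _; by rewrite subset0 setI_eq0.
  rewrite cards0 addn0 => <-.
  by apply: subset_leq_card; apply/subsetP => v; rewrite /W !inE => /orP [] /andP [-> ->] //; rewrite orbT.
have h4 := cardsID W C1.
have h5 : #|F1 :&: C2| = #|C2 :&: F1| by rewrite setIC.
lia.
Qed.
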